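(* Let $G$ be a closed and continuous metric cyclic graph whose vertex set $V$ is homeomorphic to $S^1$, and let $\gamma=\inf_{u\in V}\gamma_V(u)$. For every $r\in[0,\gamma]$, the map $g_r:V\to V$ is continuous.
   Context: Identify $S^1$ with $[0,1)$; $d_{S^1}(x,y)\in[0,1)$ is the normalized counterclockwise distance from $x$ to $y$, and $[x,y]_V$ denotes the set of points of $V$ on the closed counterclockwise arc from $x$ to $y$. A directed graph $G=(V,E)$ (no loops, no opposite edges) with $V\subseteq S^1$ is cyclic if whenever $u_0\to u_1$, every $w\in V$ strictly counterclockwise-between $u_0$ and $u_1$ has $u_0\to w$ and $w\to u_1$. Define $\gamma_m(u_0)=\sup\{\sum_{i=0}^{m-1}d_{S^1}(u_i,u_{i+1}):u_0\to\cdots\to u_m\text{ in }G\}$ and $f_1(u)=u+\gamma_1(u)\bmod1$. $G$ is closed if $V$ is closed in $S^1$ (then $f_1(u)\in V$), and continuous if every $\gamma_m$ is continuous. $G$ is metric if $V$ carries a metric $d_V$ inducing the subspace topology from $S^1$ such that $d_V(u_0,u_1)<d_V(u_0,u_2)$ for every directed path $u_0\to u_1\to u_2$. Set $\gamma_V(u)=d_V(u,f_1(u))$. For $r\in[0,\gamma_V(u)]$, $g_r(u)$ is the unique point $w\in[u,f_1(u)]_V$ with $d_V(u,w)=r$. *)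

(* Defs.v *)
From Stdlib Require Import Reals ClassicalEpsilon.
From Coquelicot Require Import Rbar Lub.
Open Scope R_scope.

(* S^1 is identified with [0,1). *)
Definition inS1 (x : R) : Prop := 0 <= x < 1.

(* normalized counterclockwise distance from x to y, in [0,1) *)
Definition dS1 (x y : R) : R := frac_part (y - x).

Definition circ_dist (x y : R) : R := Rmin (dS1 x y) (dS1 y x).

Definition cont_on (A B : R -> Prop) (f : R -> R) : Prop :=
  (forall x, A x -> B (f x)) /\
  forall x, A x -> forall eps, 0 < eps -> exists delta, 0 < delta /\
    forall y, A y -> circ_dist x y < delta -> circ_dist (f x) (f y) < eps.

Definition homeomorphic (A B : R -> Prop) : Prop :=
  exists h k : R -> R, cont_on A B h /\ cont_on B A k /\
    (forall x, A x -> k (h x) = x) /\ (forall y, B y -> h (k y) = y).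

Definition ccw_between (x w y : R) : Prop := 0 < dS1 x w < dS1 x y.

Definition digraph (V : R -> Prop) (E : R -> R -> Prop) : Prop :=
  (forall x, V x -> inS1 x) /\
  (forall u v, E u v -> V u /\ V v) /\
  (forall u, ~ E u u) /\
  (forall u v, E u v -> ~ E v u).

Definition cyclic_graph (V : R -> Prop) (E : R -> R -> Prop) : Prop :=
  digraph V E /\
  forall u0 u1, E u0 u1 -> forall w, V w -> ccw_between u0 w u1 -> E u0 w /\ E w u1.

Fixpoint path_len (u : nat -> R) (m : nat) : R :=
  match m with
  | O => 0
  | S k => path_len u k + dS1 (u k) (u (S k))
  end.

Definition is_path (E : R -> R -> Prop) (u : nat -> R) (m : nat) : Prop :=
  forall i, (i < m)%nat -> E (u i) (u (S i)).

(* gamma_m(u0) = sup of lengths of directed paths u0 -> ... -> um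
   (convention: 0 if there is no such path, i.e. the real part of -oo) *)
Definition gamma_m (E : R -> R -> Prop) (m : nat) (u0 : R) : R :=
  real (Lub_Rbar (fun s => exists u : nat -> R,
           u O = u0 /\ is_path E u m /\ s = path_len u m)).

Definition f1 (E : R -> R -> Prop) (u : R) : R := frac_part (u + gamma_m E 1 u).

Definition closed_in_S1 (V : R -> Prop) : Prop :=
  forall x, inS1 x ->
    (forall eps, 0 < eps -> exists v, V v /\ circ_dist x v < eps) -> V x.

Definition continuous_graph (V : R -> Prop) (E : R -> R -> Prop) : Prop :=
  forall m, (1 <= m)%nat ->
    forall u, V u -> forall eps, 0 < eps -> exists delta, 0 < delta /\
      forall v, V v -> circ_dist u v < delta -> Rabs (gamma_m E m v - gamma_m E m u) < eps.

Definition metric_on (V : R -> Prop) (dV : R -> R -> R) : Prop :=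
  (forall x y, V x -> V y -> 0 <= dV x y) /\
  (forall x y, V x -> V y -> (dV x y = 0 <-> x = y)) /\
  (forall x y, V x -> V y -> dV x y = dV y x) /\
  (forall x y z, V x -> V y -> V z -> dV x z <= dV x y + dV y z).

Definition induces_subspace_topology (V : R -> Prop) (dV : R -> R -> R) : Prop :=
  (forall u, V u -> forall eps, 0 < eps -> exists delta, 0 < delta /\
     forall v, V v -> circ_dist u v < delta -> dV u v < eps) /\
  (forall u, V u -> forall eps, 0 < eps -> exists delta, 0 < delta /\
     forall v, V v -> dV u v < delta -> circ_dist u v < eps).

Definition metric_graph_with (V : R -> Prop) (E : R -> R -> Prop) (dV : R -> R -> R) : Prop :=
  metric_on V dV /\ induces_subspace_topology V dV /\
  forall u0 u1 u2, E u0 u1 -> E u1 u2 -> dV u0 u1 < dV u0 u2.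

Definition gamma_V (E : R -> R -> Prop) (dV : R -> R -> R) (u : R) : R := dV u (f1 E u).

Definition in_arc (V : R -> Prop) (x y w : R) : Prop := V w /\ dS1 x w <= dS1 x y.

Definition g_r (V : R -> Prop) (E : R -> R -> Prop) (dV : R -> R -> R) (r u : R) : R :=
  epsilon (inhabits 0) (fun w =>
    (in_arc V u (f1 E u) w /\ dV u w = r) /\
    forall w', in_arc V u (f1 E u) w' /\ dV u w' = r -> w' = w).

Definition is_inf (A : R -> Prop) (g : R) : Prop :=
  (forall s, A s -> g <= s) /\ (forall b, (forall s, A s -> b <= s) -> b <= g).

(* Main.v *)
Require Import Defs.
From Stdlib Require Import Reals Lra Lia ZArith Classical ClassicalEpsilon.
From Coquelicot Require Import Rbar Lub.
Open Scope R_scope.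

Lemma frac_int x : exists n, x - frac_part x = IZR n.
Proof. exists (Int_part x). unfold frac_part. ring. Qed.

Lemma frac_rng x : 0 <= frac_part x < 1.
Proof. destruct (base_fp x). lra. Qed.

Lemma int_small n : -1 < IZR n < 1 -> n = 0%Z.
Proof. intros [H1 H2]. apply lt_IZR in H1. apply lt_IZR in H2. lia. Qed.

Lemma frac_unique x y n : 0 <= y < 1 -> x - y = IZR n -> frac_part x = y.
Proof.
  intros Hy Hn. destruct (frac_int x) as [m Hm]. pose proof (frac_rng x).
  assert (Hz : (m - n = 0)%Z).
  { apply int_small. rewrite minus_IZR. lra. }
  assert (IZR m = IZR n) by (f_equal; lia). lra.
Qed.

Lemma frac_id x : 0 <= x < 1 -> frac_part x = x.
Proof. intros H. apply (frac_unique x x 0). auto. simpl. ring. Qed.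

Lemma frac_shift x y n : y - x = IZR n -> frac_part y = frac_part x.
Proof.
  intros H. destruct (frac_int x) as [m Hm].
  apply (frac_unique y _ (n + m)). apply frac_rng. rewrite plus_IZR. lra.
Qed.

Lemma frac_eq_int a b : frac_part a = frac_part b -> exists n, b - a = IZR n.
Proof.
  intros H. destruct (frac_int a) as [m Hm]. destruct (frac_int b) as [k Hk].
  exists (k - m)%Z. rewrite minus_IZR. lra.
Qed.

Lemma frac_frac_diff a b : exists n, (frac_part b - frac_part a) - (b - a) = IZR n.
Proof.
  destruct (frac_int a) as [m Hm]. destruct (frac_int b) as [k Hk].
  exists (m - k)%Z. rewrite minus_IZR. lra.
Qed.

Lemma dS1_frac a b : dS1 (frac_part a) (frac_part b) = frac_part (b - a).
Proof.
  unfold dS1. destruct (frac_frac_diff a b) as [n Hn].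
  apply (frac_shift _ _ n). lra.
Qed.

Lemma dS1_shift x y x' y' n : (y' - x') - (y - x) = IZR n -> dS1 x' y' = dS1 x y.
Proof. intros H. unfold dS1. apply (frac_shift _ _ n). exact H. Qed.

Lemma cd_shift x y x' y' n : (y' - x') - (y - x) = IZR n -> circ_dist x' y' = circ_dist x y.
Proof.
  intros H. unfold circ_dist. rewrite (dS1_shift x y x' y' n H).
  rewrite (dS1_shift y x y' x' (-n)); [reflexivity|]. rewrite opp_IZR. lra.
Qed.

Lemma dS1_id x y : 0 <= y - x < 1 -> dS1 x y = y - x.
Proof. intros. unfold dS1. apply frac_id; auto. Qed.

Lemma frac_neg x : frac_part x <> 0 -> frac_part (- x) = 1 - frac_part x.
Proof.
  intros H. destruct (frac_int x) as [m Hm]. pose proof (frac_rng x).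
  apply (frac_unique _ _ (- m - 1)). lra. rewrite minus_IZR, opp_IZR. simpl. lra.
Qed.

Lemma frac_neg0 x : frac_part x = 0 -> frac_part (- x) = 0.
Proof.
  intros H. destruct (frac_int x) as [m Hm].
  apply (frac_unique _ _ (- m)). lra. rewrite opp_IZR. lra.
Qed.

Lemma cd_le x y n : circ_dist x y <= Rabs (y - x - IZR n).
Proof.
  unfold circ_dist, dS1. destruct (frac_int (y - x)) as [m Hm].
  pose proof (frac_rng (y - x)).
  assert (Hyx : x - y = - (y - x)) by ring. rewrite Hyx.
  destruct (Req_dec (frac_part (y - x)) 0) as [H0|H0].
  - rewrite (frac_neg0 _ H0), H0. unfold Rmin. destruct Rle_dec; apply Rabs_pos.
  - rewrite (frac_neg _ H0).
    assert (Hk : (m - n >= 0)%Z \/ (m - n <= -1)%Z) by lia.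
    destruct Hk as [Hk|Hk].
    + apply IZR_ge in Hk. rewrite minus_IZR in Hk.
      apply Rle_trans with (frac_part (y - x)). apply Rmin_l.
      rewrite Rabs_right; lra.
    + apply IZR_le in Hk. rewrite minus_IZR in Hk.
      apply Rle_trans with (1 - frac_part (y - x)). apply Rmin_r.
      rewrite Rabs_left1; lra.
Qed.

Lemma cd_ex x y : exists n, circ_dist x y = Rabs (y - x - IZR n).
Proof.
  unfold circ_dist, dS1. destruct (frac_int (y - x)) as [m Hm].
  pose proof (frac_rng (y - x)).
  assert (Hyx : x - y = - (y - x)) by ring. rewrite Hyx.
  destruct (Req_dec (frac_part (y - x)) 0) as [H0|H0].
  - rewrite (frac_neg0 _ H0), H0. exists m. rewrite Rmin_left by lra.
    replace (y - x - IZR m) with 0 by lra. rewrite Rabs_R0; auto.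
  - rewrite (frac_neg _ H0). unfold Rmin. destruct Rle_dec.
    + exists m. rewrite Rabs_right; lra.
    + exists (m + 1)%Z. rewrite plus_IZR. rewrite Rabs_left1; simpl; lra.
Qed.

Lemma cd_nonneg x y : 0 <= circ_dist x y.
Proof. destruct (cd_ex x y) as [n ->]. apply Rabs_pos. Qed.

Lemma cd_sym x y : circ_dist x y = circ_dist y x.
Proof. unfold circ_dist. apply Rmin_comm. Qed.

Lemma cd_abs x y : circ_dist x y <= Rabs (y - x).
Proof. pose proof (cd_le x y 0). simpl in H. now rewrite Rminus_0_r in H. Qed.

Lemma cd_tri x y z : circ_dist x z <= circ_dist x y + circ_dist y z.
Proof.
  destruct (cd_ex x y) as [n Hn]. destruct (cd_ex y z) as [m Hm].
  rewrite Hn, Hm. apply Rle_trans with (Rabs (z - x - IZR (n + m))). apply cd_le.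
  rewrite plus_IZR. replace (z - x - (IZR n + IZR m)) with ((y - x - IZR n) + (z - y - IZR m)) by ring.
  apply Rabs_triang.
Qed.

Lemma cd_frac a b : circ_dist (frac_part a) (frac_part b) = circ_dist a b.
Proof.
  destruct (frac_frac_diff a b) as [n Hn]. apply (cd_shift _ _ _ _ n). exact Hn.
Qed.

Lemma cd_refl x : circ_dist x x = 0.
Proof.
  apply Rle_antisym. pose proof (cd_le x x 0). simpl in H.
  replace (x - x - 0) with 0 in H by ring. rewrite Rabs_R0 in H. auto. apply cd_nonneg.
Qed.

Lemma cd_zero x y : inS1 x -> inS1 y -> circ_dist x y = 0 -> x = y.
Proof.
  unfold inS1. intros Hx Hy H. destruct (cd_ex x y) as [n Hn]. rewrite H in Hn.
  symmetry in Hn. assert (Hz: y - x - IZR n = 0) by (destruct (Req_dec (y - x - IZR n) 0) as [?|Hne]; [auto| apply Rabs_no_R0 in Hne; contradiction]). clear Hn. rename Hz into Hn. assert (n = 0%Z) by (apply int_small; lra).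
  subst. simpl in Hn. lra.
Qed.

Lemma inS1_eq_int a b n : inS1 a -> inS1 b -> b - a = IZR n -> a = b.
Proof.
  unfold inS1; intros Ha Hb H. assert (n = 0%Z) by (apply int_small; lra). subst. simpl in H. lra.
Qed.

Lemma dS1_inj p a b : inS1 a -> inS1 b -> dS1 p a = dS1 p b -> a = b.
Proof.
  unfold dS1. intros Ha Hb H. destruct (frac_eq_int _ _ H) as [n Hn].
  apply (inS1_eq_int a b n); auto. lra.
Qed.

Lemma dS1_nz p y : inS1 p -> inS1 y -> y <> p -> dS1 p y <> 0.
Proof.
  intros Hp Hy Hne H. apply Hne. apply (dS1_inj p); auto.
  unfold dS1 at 2. rewrite Rminus_diag. rewrite fp_R0. auto.
Qed.

Lemma dS1_rng x y : 0 <= dS1 x y < 1.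
Proof. apply frac_rng. Qed.

Lemma frac_inS1 x : inS1 (frac_part x).
Proof. apply frac_rng. Qed.

Lemma cont_eps (f : R -> R) :
  (forall t eps, 0 < eps -> exists d, 0 < d /\ forall t', Rabs (t' - t) < d -> Rabs (f t' - f t) < eps) ->
  continuity f.
Proof.
  intros H t. unfold continuity_pt, continue_in, limit1_in, limit_in. simpl. unfold R_dist.
  intros eps Heps. destruct (H t eps Heps) as [d [Hd Hf]]. exists d. split; auto.
  intros x [_ Hx]. apply Hf; auto.
Qed.

Lemma V_full V (Hsub : forall x, V x -> inS1 x) (Hh : homeomorphic inS1 V) :
  forall p, inS1 p -> V p.
Proof.
  intros p Hp. apply NNPP. intros HpV.
  destruct Hh as [h [k [[Hhr Hhc] [_ [Hkh _]]]]].
  set (F := fun t => dS1 p (h (frac_part t))).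
  assert (HFc : continuity F).
  { apply cont_eps. intros t eps Heps.
    set (y := h (frac_part t)).
    assert (HyV : V y) by (apply Hhr, frac_inS1).
    assert (Hy : inS1 y) by auto.
    assert (Hyp : y <> p) by (intro E; apply HpV; rewrite <- E; auto).
    set (a := dS1 p y).
    assert (Ha : 0 < a < 1).
    { pose proof (dS1_rng p y). pose proof (dS1_nz p y Hp Hy Hyp). unfold a. lra. }
    set (eta := Rmin eps (Rmin a (1 - a))).
    assert (Heta : 0 < eta) by (unfold eta; repeat apply Rmin_glb_lt; lra).
    destruct (Hhc (frac_part t) (frac_inS1 t) eta Heta) as [d [Hd Hdc]].
    exists d. split; auto. intros t' Ht'.
    assert (Hc : circ_dist (h (frac_part t)) (h (frac_part t')) < eta).
    { apply Hdc. apply frac_inS1. rewrite cd_frac. eapply Rle_lt_trans. apply cd_abs. auto. }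
    fold y in Hc. destruct (cd_ex y (h (frac_part t'))) as [n Hn].
    set (d0 := h (frac_part t') - y - IZR n) in *.
    assert (Hd0 : Rabs d0 < eta) by lra.
    assert (Hd0' : - a < d0 < 1 - a).
    { assert (eta <= a) by (unfold eta; eapply Rle_trans; [apply Rmin_r| apply Rmin_l]).
      assert (eta <= 1 - a) by (unfold eta; eapply Rle_trans; [apply Rmin_r| apply Rmin_r]).
      apply Rabs_def2 in Hd0. lra. }
    unfold F. fold y. fold a.
    assert (HF' : dS1 p (h (frac_part t')) = a + d0).
    { assert (Ea : a = frac_part (y - p)) by reflexivity.
      unfold dS1 at 1. destruct (frac_int (y - p)) as [m Hm]. rewrite <- Ea in Hm.
      apply (frac_unique _ _ (n + m)). lra. rewrite plus_IZR. unfold d0 in *. lra. }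
    rewrite HF'. replace (a + d0 - a) with d0 by ring.
    eapply Rlt_le_trans. exact Hd0. unfold eta. apply Rmin_l. }
  set (G := fun t => F t - F (t + / 2)).
  assert (HGc : continuity G).
  { intro t. unfold G. apply continuity_pt_minus. apply HFc.
    apply (continuity_pt_comp (fun t => t + / 2) F). apply continuity_pt_plus.
    apply derivable_continuous_pt, derivable_pt_id. apply continuity_pt_const. intros ? ?; auto.
    apply HFc. }
  assert (HF1 : F 1 = F 0).
  { unfold F. f_equal. f_equal. apply (frac_shift _ _ 1). simpl. lra. }
  assert (Hex : exists t, G t = 0).
  { assert (HG2 : G (/2) = - G 0).
    { unfold G. replace (/2 + /2) with 1 by field. rewrite HF1.
      replace (0 + /2) with (/2) by ring. ring. }
    destruct (Rtotal_order (G 0) 0) as [Hlt|[Heq|Hgt]].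
    - assert (Hlt2 : 0 < G (/2)) by lra.
      destruct (IVT G 0 (/2) HGc ltac:(lra) Hlt Hlt2) as [z [_ Hz]]. exists z; auto.
    - exists 0; auto.
    - set (G' := fun t => - G t).
      assert (HG'c : continuity G') by (unfold G'; apply continuity_opp; auto).
      assert (H1 : G' 0 < 0) by (unfold G'; lra).
      assert (H2 : 0 < G' (/2)) by (unfold G'; lra).
      destruct (IVT G' 0 (/2) HG'c ltac:(lra) H1 H2) as [z [_ Hz]].
      exists z. unfold G' in Hz. lra. }
  destruct Hex as [t Ht]. unfold G, F in Ht.
  assert (Heq : h (frac_part t) = h (frac_part (t + / 2))).
  { apply (dS1_inj p); try (apply Hsub, Hhr, frac_inS1). lra. }
  apply (f_equal k) in Heq. rewrite !Hkh in Heq by apply frac_inS1.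
  destruct (frac_eq_int _ _ Heq) as [n Hn].
  assert (IZR n = / 2) by lra.
  assert (0 < IZR n < 1) by lra. destruct H0 as [H1 H2]. apply lt_IZR in H1. apply lt_IZR in H2. lia.
Qed.

Definition S1set (E : R -> R -> Prop) u := fun s => exists u0 : nat -> R, u0 O = u /\ is_path E u0 1 /\ s = path_len u0 1.

Lemma S1set_iff E u s : S1set E u s <-> exists v, E u v /\ s = dS1 u v.
Proof.
  split.
  - intros [u0 [H0 [Hp Hs]]]. exists (u0 1%nat). split.
    + rewrite <- H0. apply Hp. lia.
    + rewrite Hs. simpl. rewrite H0. ring.
  - intros [v [Hv Hs]]. exists (fun i => match i with O => u | _ => v end).
    split; [reflexivity|split].
    + intros i Hi. assert (i = 0%nat) by lia. subst. exact Hv.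
    + rewrite Hs. simpl. ring.
Qed.

Lemma gam1_props E u :
  0 <= gamma_m E 1 u <= 1 /\ (forall v, E u v -> dS1 u v <= gamma_m E 1 u) /\
  (forall t, 0 <= t < gamma_m E 1 u -> exists v, E u v /\ t < dS1 u v).
Proof.
  change (gamma_m E 1 u) with (real (Lub_Rbar (S1set E u))).
  destruct (Lub_Rbar_correct (S1set E u)) as [Hub Hlub].
  assert (H1 : is_ub_Rbar (S1set E u) (Finite 1)).
  { intros s Hs. apply S1set_iff in Hs. destruct Hs as [v [_ ->]]. simpl.
    left. apply dS1_rng. }
  destruct (Lub_Rbar (S1set E u)) as [l| |] eqn:Hl.
  - simpl. assert (Hne : exists s, S1set E u s).
    { apply NNPP. intros Hn. assert (Hm : is_ub_Rbar (S1set E u) m_infty).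
      { intros s Hs. exfalso. apply Hn. exists s; auto. }
      specialize (Hlub _ Hm). simpl in Hlub. auto. }
    destruct Hne as [s0 Hs0]. pose proof (Hub s0 Hs0) as Hs0l. simpl in Hs0l.
    pose proof (Hlub _ H1) as Hl1. simpl in Hl1.
    pose proof Hs0 as Hs0'. apply S1set_iff in Hs0'. destruct Hs0' as [v0 [_ Hv0]].
    pose proof (dS1_rng u v0).
    split; [lra|split].
    + intros v Hv. assert (S1set E u (dS1 u v)) by (apply S1set_iff; eauto).
      specialize (Hub _ H0). simpl in Hub. auto.
    + intros t Ht. apply NNPP. intros Hn.
      assert (Hu : is_ub_Rbar (S1set E u) (Finite t)).
      { intros s Hs. simpl. apply S1set_iff in Hs. destruct Hs as [v [Hv ->]].
        apply Rnot_lt_le. intros Hlt. apply Hn. eauto. }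
      specialize (Hlub _ Hu). simpl in Hlub. lra.
  - specialize (Hlub _ H1). simpl in Hlub. contradiction.
  - simpl. split; [lra|split].
    + intros v Hv. assert (S1set E u (dS1 u v)) by (apply S1set_iff; eauto).
      specialize (Hub _ H). simpl in Hub. contradiction.
    + intros t Ht. lra.
Qed.

Lemma dS1_frac_add u t : inS1 u -> 0 <= t < 1 -> dS1 u (frac_part (u + t)) = t.
Proof.
  intros Hu Ht. unfold dS1. destruct (frac_int (u + t)) as [m Hm].
  apply (frac_unique _ _ (- m)). auto. rewrite opp_IZR. lra.
Qed.

Lemma frac_add_dS1 u w : inS1 w -> frac_part (u + dS1 u w) = w.
Proof.
  intros Hw. unfold dS1. destruct (frac_int (w - u)) as [m Hm].
  apply (frac_unique _ _ (- m)). auto. rewrite opp_IZR. lra.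
Qed.

Lemma dV_lip V dV (Hm : metric_on V dV) a b c d : V a -> V b -> V c -> V d ->
  Rabs (dV a b - dV c d) <= dV a c + dV b d.
Proof.
  destruct Hm as [Hp [Hz [Hs Ht]]]. intros Ha Hb Hc Hd.
  pose proof (Ht a c b Ha Hc Hb). pose proof (Ht c d b Hc Hd Hb).
  pose proof (Ht c a d Hc Ha Hd). pose proof (Ht a b d Ha Hb Hd).
  rewrite (Hs c a) in * by auto. rewrite (Hs d b) in * by auto.
  apply Rabs_le. lra.
Qed.

Definition Setup V E dV r := (forall x, V x <-> inS1 x) /\ cyclic_graph V E /\
  continuous_graph V E /\ metric_graph_with V E dV /\ 0 < r /\
  (forall u, inS1 u -> r <= dV u (f1 E u)).

Definition D (dV : R -> R -> R) u t := dV u (frac_part (u + t)).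
Notation L E u := (gamma_m E 1 u).

Lemma dV0 V E dV r (HS : Setup V E dV r) u : inS1 u -> dV u u = 0.
Proof.
  destruct HS as [HV [_ [_ [[[_ [Hz _]] _] _]]]]. intros Hu. apply Hz; auto; apply HV; auto.
Qed.

Lemma Lrange V E dV r (HS : Setup V E dV r) u : inS1 u -> 0 < L E u < 1.
Proof.
  intros Hu. pose proof (dV0 _ _ _ _ HS u Hu) as H0.
  destruct HS as [HV [_ [_ [_ [Hr HrL]]]]]. specialize (HrL u Hu).
  destruct (gam1_props E u) as [[Hl1 Hl2] _].
  unfold f1 in HrL.
  destruct (Req_dec (L E u) 0) as [Z|Z].
  { rewrite Z, Rplus_0_r, frac_id in HrL by auto. lra. }
  destruct (Req_dec (L E u) 1) as [O|O].
  { rewrite O in HrL. rewrite (frac_shift u (u + 1) 1) in HrL by (simpl; lra).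
    rewrite frac_id in HrL by auto. lra. }
  lra.
Qed.

Lemma dV_joint V E dV r (HS : Setup V E dV r) u x : inS1 u -> inS1 x ->
  forall eps, 0 < eps -> exists d, 0 < d /\ forall v y, inS1 v -> inS1 y ->
    circ_dist u v < d -> circ_dist x y < d -> Rabs (dV v y - dV u x) < eps.
Proof.
  destruct HS as [HV [_ [_ [[Hm [[Hi _] _]] _]]]]. intros Hu Hx eps He.
  destruct (Hi u (proj2 (HV u) Hu) (eps/2) ltac:(lra)) as [d1 [Hd1 H1]].
  destruct (Hi x (proj2 (HV x) Hx) (eps/2) ltac:(lra)) as [d2 [Hd2 H2]].
  exists (Rmin d1 d2). split. apply Rmin_glb_lt; auto.
  intros v y Hv Hy Huv Hxy.
  assert (A : dV u v < eps/2) by (apply H1; [apply HV; auto| eapply Rlt_le_trans; [exact Huv| apply Rmin_l]]).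
  assert (B : dV x y < eps/2) by (apply H2; [apply HV; auto| eapply Rlt_le_trans; [exact Hxy| apply Rmin_r]]).
  pose proof (dV_lip V dV Hm v y u x) as Hl.
  destruct Hm as [_ [_ [Hs _]]].
  rewrite (Hs v u), (Hs y x) in Hl by (apply HV; auto).
  specialize (Hl ltac:(apply HV; auto) ltac:(apply HV; auto) ltac:(apply HV; auto) ltac:(apply HV; auto)).
  lra.
Qed.

Lemma D_cont_t V E dV r (HS : Setup V E dV r) u : inS1 u -> continuity (D dV u).
Proof.
  intros Hu. apply cont_eps. intros t eps He.
  destruct (dV_joint V E dV r HS u (frac_part (u + t)) Hu (frac_inS1 _) eps He) as [d [Hd H]].
  exists d. split; auto. intros t' Ht'. unfold D. apply H; auto using frac_inS1.
  rewrite cd_refl; auto. rewrite cd_frac. eapply Rle_lt_trans. apply cd_abs.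
  replace (u + t' - (u + t)) with (t' - t) by ring. auto.
Qed.

Lemma D_cont_u V E dV r (HS : Setup V E dV r) u t : inS1 u ->
  forall eps, 0 < eps -> exists d, 0 < d /\ forall v, inS1 v -> circ_dist u v < d ->
    Rabs (D dV v t - D dV u t) < eps.
Proof.
  intros Hu eps He.
  destruct (dV_joint V E dV r HS u (frac_part (u + t)) Hu (frac_inS1 _) eps He) as [d [Hd H]].
  exists d. split; auto. intros v Hv Huv. unfold D. apply H; auto using frac_inS1.
  rewrite cd_frac. rewrite (cd_shift u v _ _ 0); auto. simpl. ring.
Qed.

Lemma L_cont V E dV r (HS : Setup V E dV r) u : inS1 u ->
  forall eps, 0 < eps -> exists d, 0 < d /\ forall v, inS1 v -> circ_dist u v < d ->
    Rabs (L E v - L E u) < eps.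
Proof.
  destruct HS as [HV [_ [Hc _]]]. intros Hu eps He.
  destruct (Hc 1%nat ltac:(lia) u (proj2 (HV u) Hu) eps He) as [d [Hd H]].
  exists d. split; auto. intros v Hv Huv. apply H; auto. apply HV; auto.
Qed.

Lemma edges V E dV r (HS : Setup V E dV r) u t1 t2 : inS1 u -> 0 < t1 < t2 -> t2 < L E u ->
  E u (frac_part (u + t1)) /\ E (frac_part (u + t1)) (frac_part (u + t2)).
Proof.
  intros Hu Ht Ht2. pose proof (Lrange V E dV r HS u Hu) as HL.
  destruct HS as [HV [[_ Hcyc] _]].
  destruct (gam1_props E u) as [_ [_ Hsup]].
  destruct (Hsup t2 ltac:(lra)) as [v [Huv Hv]].
  set (w1 := frac_part (u + t1)). set (w2 := frac_part (u + t2)).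
  assert (Hd1 : dS1 u w1 = t1) by (apply dS1_frac_add; auto; lra).
  assert (Hd2 : dS1 u w2 = t2) by (apply dS1_frac_add; auto; lra).
  pose proof (dS1_rng u v) as Hrg.
  destruct (Hcyc u v Huv w1 (proj2 (HV _) (frac_inS1 _))) as [Hw1 Hw1v].
  { unfold ccw_between. lra. }
  split; auto.
  destruct (Hcyc w1 v Hw1v w2 (proj2 (HV _) (frac_inS1 _))) as [Hf _]; auto.
  unfold ccw_between.
  assert (E1 : dS1 w1 w2 = t2 - t1).
  { unfold w1, w2. rewrite dS1_frac. replace (u + t2 - (u + t1)) with (t2 - t1) by ring.
    apply frac_id. lra. }
  assert (E2 : dS1 w1 v = dS1 u v - t1).
  { unfold dS1 at 1. destruct (frac_int (v - u)) as [m Hm]. destruct (frac_int (u + t1)) as [k Hk].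
    apply (frac_unique _ _ (m + k)). lra. rewrite plus_IZR. unfold w1, dS1 in *. lra. }
  lra.
Qed.

Lemma D_strict0 V E dV r (HS : Setup V E dV r) u t1 t2 : inS1 u -> 0 <= t1 < t2 -> t2 < L E u ->
  D dV u t1 < D dV u t2.
Proof.
  intros Hu Ht Ht2. pose proof (Lrange V E dV r HS u Hu) as HL.
  pose proof (dV0 V E dV r HS u Hu) as H0.
  destruct (Req_dec t1 0) as [Z|Z].
  - subst t1. unfold D. rewrite Rplus_0_r, frac_id by auto. rewrite H0.
    destruct HS as [HV [_ [_ [[[Hp [Hz _]] _] _]]]].
    assert (Hu' : V u) by (apply HV; auto).
    assert (Hw : V (frac_part (u + t2))) by (apply HV, frac_inS1).
    pose proof (Hp u _ Hu' Hw) as Hpp. destruct Hpp as [Hpp|Hpp]; auto.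
    exfalso. assert (Heq : u = frac_part (u + t2)) by (apply Hz; auto).
    assert (Hd : dS1 u (frac_part (u + t2)) = t2) by (apply dS1_frac_add; auto; lra).
    rewrite <- Heq in Hd. unfold dS1 in Hd. replace (u - u) with 0 in Hd by ring. rewrite fp_R0 in Hd. lra.
  - destruct (edges V E dV r HS u t1 t2 Hu ltac:(lra) Ht2) as [A B].
    destruct HS as [_ [_ [_ [[_ [_ Hmon]] _]]]]. unfold D. eapply Hmon; eauto.
Qed.

Lemma D_strict V E dV r (HS : Setup V E dV r) u t1 t2 : inS1 u -> 0 <= t1 < t2 -> t2 <= L E u ->
  D dV u t1 < D dV u t2.
Proof.
  intros Hu Ht Ht2. destruct Ht2 as [Ht2|Ht2]. eapply D_strict0; eauto.
  set (m := (t1 + t2) / 2).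
  assert (A : D dV u t1 < D dV u m) by (eapply D_strict0; eauto; unfold m; lra).
  enough (D dV u m <= D dV u t2) by lra.
  apply Rnot_lt_le. intros Hlt.
  pose proof (D_cont_t V E dV r HS u Hu t2) as Hc.
  unfold continuity_pt, continue_in, limit1_in, limit_in in Hc. simpl in Hc. unfold R_dist in Hc.
  destruct (Hc (D dV u m - D dV u t2) ltac:(lra)) as [d [Hd Hx]].
  set (t' := Rmax ((m + t2) / 2) (t2 - d / 2)).
  assert (Ht'1 : (m + t2) / 2 <= t') by apply Rmax_l.
  assert (Ht'2 : t2 - d / 2 <= t') by apply Rmax_r.
  assert (Ht'3 : t' < t2) by (unfold t'; apply Rmax_lub_lt; unfold m in *; lra).
  assert (B : D dV u m < D dV u t') by (eapply D_strict0; eauto; unfold m in *; lra).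
  assert (C : Rabs (D dV u t' - D dV u t2) < D dV u m - D dV u t2).
  { apply Hx. split. split. exact I. lra. rewrite Rabs_left1; lra. }
  apply Rabs_def2 in C. lra.
Qed.

Lemma T_ex V E dV r (HS : Setup V E dV r) u : inS1 u -> exists t, 0 < t <= L E u /\ D dV u t = r.
Proof.
  intros Hu. pose proof (Lrange V E dV r HS u Hu) as HL.
  pose proof (dV0 V E dV r HS u Hu) as H0.
  assert (HD0 : D dV u 0 = 0) by (unfold D; rewrite Rplus_0_r, frac_id by auto; auto).
  pose proof HS as [_ [_ [_ [_ [Hr HrL]]]]].
  assert (HDL : r <= D dV u (L E u)) by (apply HrL; auto).
  destruct HDL as [HDL|HDL].
  - set (G := fun t => D dV u t - r).
    assert (HGc : continuity G).
    { unfold G. intro t. apply continuity_pt_minus. apply (D_cont_t V E dV r HS u Hu). apply continuity_pt_const. intros ? ?; auto. }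
    destruct (IVT G 0 (L E u) HGc ltac:(lra) ltac:(unfold G; lra) ltac:(unfold G; lra)) as [z [Hz1 Hz2]].
    exists z. unfold G in Hz2. split; [|lra]. split; [|lra].
    destruct Hz1 as [[Hz1|Hz1] _]; auto. subst z. lra.
  - exists (L E u). split; [lra|auto].
Qed.

Lemma g_char V E dV r (HS : Setup V E dV r) u t : inS1 u -> 0 <= t <= L E u -> D dV u t = r ->
  g_r V E dV r u = frac_part (u + t).
Proof.
  intros Hu Ht HD. pose proof (Lrange V E dV r HS u Hu) as HL.
  pose proof HS as [HV _].
  set (P := fun w => (in_arc V u (f1 E u) w /\ dV u w = r) /\
    forall w', in_arc V u (f1 E u) w' /\ dV u w' = r -> w' = w).
  assert (Hf1 : dS1 u (f1 E u) = L E u) by (unfold f1; apply dS1_frac_add; auto; lra).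
  assert (HP : P (frac_part (u + t))).
  { split. split. split. apply HV, frac_inS1.
    rewrite Hf1, dS1_frac_add; auto; lra. auto.
    intros w' [[Hw' Ha] Hr']. rewrite Hf1 in Ha.
    assert (Hw1 : inS1 w') by (apply HV; auto).
    set (t' := dS1 u w') in *.
    assert (Ew : frac_part (u + t') = w') by (apply frac_add_dS1; auto).
    assert (HD' : D dV u t' = r) by (unfold D; rewrite Ew; auto).
    assert (Ht0 : 0 <= t' < 1) by apply dS1_rng.
    destruct (Rtotal_order t' t) as [Hlt|[Heq|Hgt]].
    - pose proof (D_strict V E dV r HS u t' t Hu ltac:(lra) ltac:(lra)). lra.
    - rewrite <- Ew, Heq. auto.
    - pose proof (D_strict V E dV r HS u t t' Hu ltac:(lra) ltac:(lra)). lra. }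
  assert (HPe : P (g_r V E dV r u)).
  { unfold g_r. apply epsilon_spec. exists (frac_part (u + t)). exact HP. }
  destruct HP as [_ Hu1]. destruct HPe as [Hg _]. apply Hu1. exact Hg.
Qed.

Lemma T_lower V E dV r (HS : Setup V E dV r) v t1 Tv : inS1 v -> 0 <= t1 <= L E v ->
  D dV v t1 < r -> 0 <= Tv <= L E v -> D dV v Tv = r -> t1 < Tv.
Proof.
  intros Hv H1 H2 H3 H4. destruct (Rtotal_order t1 Tv) as [?|[?|?]]; auto.
  - subst. lra.
  - pose proof (D_strict V E dV r HS v Tv t1 Hv ltac:(lra) ltac:(lra)). lra.
Qed.

Lemma T_upper V E dV r (HS : Setup V E dV r) v t2 Tv : inS1 v -> 0 <= t2 <= L E v ->
  r < D dV v t2 -> 0 <= Tv <= L E v -> D dV v Tv = r -> Tv < t2.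
Proof.
  intros Hv H1 H2 H3 H4. destruct (Rtotal_order t2 Tv) as [?|[?|?]]; auto.
  - pose proof (D_strict V E dV r HS v t2 Tv Hv ltac:(lra) ltac:(lra)). lra.
  - subst. lra.
Qed.

Lemma g_final_dist u v T Tv eps : circ_dist u v < eps / 2 -> Rabs (Tv - T) < eps / 4 -> 0 < eps ->
  circ_dist (frac_part (u + T)) (frac_part (v + Tv)) < eps.
Proof.
  intros H1 H2 He. rewrite cd_frac.
  eapply Rle_lt_trans. apply (cd_tri _ (v + T)).
  rewrite (cd_shift u v (u + T) (v + T) 0) by (simpl; ring).
  pose proof (cd_abs (v + T) (v + Tv)). replace (v + Tv - (v + T)) with (Tv - T) in H by ring.
  lra.
Qed.

Lemma g_cont V E dV r (HS : Setup V E dV r) : cont_on V V (g_r V E dV r).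
Proof.
  pose proof HS as [HV [_ [_ [_ [Hr HrL]]]]].
  split.
  - intros x Hx. apply HV in Hx. destruct (T_ex V E dV r HS x Hx) as [T [HT HD]].
    rewrite (g_char V E dV r HS x T Hx ltac:(lra) HD). apply HV, frac_inS1.
  - intros u Hu eps He. apply HV in Hu.
    pose proof (Lrange V E dV r HS u Hu) as HLu.
    destruct (T_ex V E dV r HS u Hu) as [T [HT HD]].
    rewrite (g_char V E dV r HS u T Hu ltac:(lra) HD).
    set (eta := Rmin (eps / 4) (T / 2)).
    assert (Heta : 0 < eta) by (unfold eta; apply Rmin_glb_lt; lra).
    assert (Heta1 : eta <= eps / 4) by apply Rmin_l.
    assert (Heta2 : eta <= T / 2) by apply Rmin_r.
    set (t1 := T - eta).
    assert (HD1 : D dV u t1 < r).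
    { rewrite <- HD. apply (D_strict V E dV r HS); auto; unfold t1; lra. }
    destruct (D_cont_u V E dV r HS u t1 Hu (r - D dV u t1) ltac:(lra)) as [da [Hda Ha]].
    destruct HT as [HT0 [HTL|HTL]].
    + set (t2 := Rmin (T + eta) ((T + L E u) / 2)).
      assert (Ht21 : t2 <= T + eta) by apply Rmin_l.
      assert (Ht22 : t2 <= (T + L E u) / 2) by apply Rmin_r.
      assert (Ht23 : T < t2) by (apply Rmin_glb_lt; lra).
      assert (HD2 : r < D dV u t2).
      { rewrite <- HD. apply (D_strict V E dV r HS); auto; lra. }
      destruct (D_cont_u V E dV r HS u t2 Hu (D dV u t2 - r) ltac:(lra)) as [db [Hdb Hb]].
      set (kap := Rmin eta ((L E u - T) / 2)).
      assert (Hkap : 0 < kap) by (apply Rmin_glb_lt; lra).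
      assert (Hk1 : kap <= eta) by apply Rmin_l.
      assert (Hk2 : kap <= (L E u - T) / 2) by apply Rmin_r.
      destruct (L_cont V E dV r HS u Hu kap Hkap) as [dc [Hdc Hc]].
      exists (Rmin (Rmin da db) (Rmin dc (eps / 2))). split.
      { repeat apply Rmin_glb_lt; lra. }
      intros v Hv Huv. apply HV in Hv.
      assert (Hm1 : circ_dist u v < da) by (eapply Rlt_le_trans; [exact Huv|]; eapply Rle_trans; apply Rmin_l).
      assert (Hm2 : circ_dist u v < db) by (eapply Rlt_le_trans; [exact Huv|]; eapply Rle_trans; [apply Rmin_l|apply Rmin_r]).
      assert (Hm3 : circ_dist u v < dc) by (eapply Rlt_le_trans; [exact Huv|]; eapply Rle_trans; [apply Rmin_r|apply Rmin_l]).
      assert (Hm4 : circ_dist u v < eps / 2) by (eapply Rlt_le_trans; [exact Huv|]; eapply Rle_trans; apply Rmin_r).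
      specialize (Ha v Hv Hm1). specialize (Hb v Hv Hm2). specialize (Hc v Hv Hm3).
      apply Rabs_def2 in Ha. apply Rabs_def2 in Hb. apply Rabs_def2 in Hc.
      destruct (T_ex V E dV r HS v Hv) as [Tv [HTv HDv]].
      rewrite (g_char V E dV r HS v Tv Hv ltac:(lra) HDv).
      assert (Hlo : t1 < Tv) by (apply (T_lower V E dV r HS v t1 Tv); auto; unfold t1 in *; lra).
      assert (Hup : Tv < t2) by (apply (T_upper V E dV r HS v t2 Tv); auto; lra).
      apply g_final_dist; auto. apply Rabs_def1; unfold t1 in *; lra.
    + destruct (L_cont V E dV r HS u Hu eta Heta) as [dc [Hdc Hc]].
      exists (Rmin da (Rmin dc (eps / 2))). split.
      { repeat apply Rmin_glb_lt; lra. }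
      intros v Hv Huv. apply HV in Hv.
      assert (Hm1 : circ_dist u v < da) by (eapply Rlt_le_trans; [exact Huv|]; apply Rmin_l).
      assert (Hm3 : circ_dist u v < dc) by (eapply Rlt_le_trans; [exact Huv|]; eapply Rle_trans; [apply Rmin_r|apply Rmin_l]).
      assert (Hm4 : circ_dist u v < eps / 2) by (eapply Rlt_le_trans; [exact Huv|]; eapply Rle_trans; apply Rmin_r).
      specialize (Ha v Hv Hm1). specialize (Hc v Hv Hm3).
      apply Rabs_def2 in Ha. apply Rabs_def2 in Hc.
      destruct (T_ex V E dV r HS v Hv) as [Tv [HTv HDv]].
      rewrite (g_char V E dV r HS v Tv Hv ltac:(lra) HDv).
      assert (Hlo : t1 < Tv) by (apply (T_lower V E dV r HS v t1 Tv); auto; unfold t1 in *; lra).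
      apply g_final_dist; auto. apply Rabs_def1; unfold t1 in *; lra.
Qed.

Lemma g_zero V E dV (Hm : metric_on V dV) u : V u -> g_r V E dV 0 u = u.
Proof.
  intros Hu. destruct Hm as [Hp [Hz _]].
  set (P := fun w => (in_arc V u (f1 E u) w /\ dV u w = 0) /\
    forall w', in_arc V u (f1 E u) w' /\ dV u w' = 0 -> w' = w).
  assert (HP : P u).
  { split. split. split; auto. unfold dS1 at 1. replace (u - u) with 0 by ring. rewrite fp_R0.
    apply dS1_rng. apply Hz; auto.
    intros w' [[Hw' _] H0]. symmetry. apply Hz; auto. }
  assert (HPe : P (g_r V E dV 0 u)).
  { unfold g_r. apply epsilon_spec. exists u. exact HP. }
  destruct HP as [_ Hu1]. destruct HPe as [Hg _]. apply Hu1. exact Hg.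
Qed.

Theorem lemma4p6 (V : R -> Prop) (E : R -> R -> Prop) (dV : R -> R -> R)
  (Hcyc : cyclic_graph V E)
  (Hclosed : closed_in_S1 V)
  (Hcont : continuous_graph V E)
  (Hmetric : metric_graph_with V E dV)
  (Hhomeo : homeomorphic inS1 V)
  (gamma : R)
  (Hgamma : is_inf (fun s => exists u, V u /\ s = gamma_V E dV u) gamma) :
  forall r, 0 <= r <= gamma -> cont_on V V (g_r V E dV r).
Proof.
  intros r Hr. destruct Hr as [[Hr|Hr] Hrg].
  - apply g_cont. assert (Hsub : forall x, V x -> inS1 x) by (apply (proj1 (proj1 Hcyc))).
    pose proof (V_full V Hsub Hhomeo) as Hfull.
    split; [intros x; split; auto|]. split; auto. split; auto. split; auto. split; auto.
    intros u Hu. destruct Hgamma as [Hg _].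
    assert (gamma <= gamma_V E dV u) by (apply Hg; exists u; split; auto).
    unfold gamma_V in H. lra.
  - subst r. destruct Hmetric as [Hm _]. split.
    + intros x Hx. rewrite g_zero; auto.
    + intros x Hx eps He. exists eps. split; auto. intros y Hy Hxy.
      rewrite !g_zero; auto.
Qed.
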